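(* Let $\mathcal{C}$ be a clone on a finite set $A=\{1,\dots,t\}$ and let $(c,d)\in A^2$. Then $\lambda(\mathcal{C},(c,d))$ is an upward closed subset of $(A^+,\le_{\mathrm{E}})$, i.e. if $\mathbf{a}\in\lambda(\mathcal{C},(c,d))$ and $\mathbf{a}\le_{\mathrm{E}}\mathbf{b}$ then $\mathbf{b}\in\lambda(\mathcal{C},(c,d))$.
   Context: A clone on $A$ is a set of finitary operations on $A$ closed under composition and containing all projections; $\mathcal{C}^{[n]}$ is its set of $n$-ary members. $A^+=\bigcup_{n\ge1}A^n$. $<_{\mathrm{lex}}$ is the strict lexicographic order on $A^n$ induced by $1<\dots<t$. For $\mathbf{a}\in A^n$, $\varphi(\mathcal{C},\mathbf{a}):=\{(f(\mathbf{a}),g(\mathbf{a})) : f,g\in\mathcal{C}^{[n]},\ f(\mathbf{c})=g(\mathbf{c})\text{ for all }\mathbf{c}<_{\mathrm{lex}}\mathbf{a}\}$, and $\lambda(\mathcal{C},(c,d)):=\{\mathbf{a}\in A^+ : (c,d)\notin\varphi(\mathcal{C},\mathbf{a})\}$. $\mathrm{firstOcc}(\mathbf{a},b)$ is $0$ if $b$ does not occur in $\mathbf{a}$, otherwise the least $i$ with $a_i=b$; $(a_1,\dots,a_m)\le_{\mathrm{E}}(b_1,\dots,b_n)$ means there is a strictly increasing $h:\{1,\dots,m\}\to\{1,\dots,n\}$ with $a_i=b_{h(i)}$ for all $i$, $\{a_1,\dots,a_m\}=\{b_1,\dots,b_n\}$, and $h(\mathrm{firstOcc}(\mathbf{a},c))=\mathrm{firstOcc}(\mathbf{b},c)$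 for all $c\in\{a_1,\dots,a_m\}$. *)

(* Defs.v *)
(* A = {1,...,t} is modelled as 'I_t = {0,...,t-1}
   with its natural order (order-isomorphic via k |-> k+1). *)
From mathcomp Require Import all_boot.
Set Implicit Arguments. Unset Strict Implicit. Unset Printing Implicit Defensive.

(* n-ary operations on 'I_t, as finite functions (extensional = Leibniz). *)
Definition op (t n : nat) := {ffun n.-tuple 'I_t -> 'I_t}.

Definition opfam (t : nat) := forall n : nat, op t n -> Prop.

Definition proj_op (t n : nat) (i : 'I_n) : op t n := [ffun x => tnth x i].

Definition comp_op (t n m : nat) (f : op t n) (gs : n.-tuple (op t m)) : op t m :=
  [ffun x => f [tuple tnth gs i x | i < n]].

Definition is_clone (t : nat) (C : opfam t) : Prop :=
  (forall n (i : 'I_n), C n (proj_op t i)) /\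
  (forall n m (f : op t n) (gs : n.-tuple (op t m)),
      0 < n -> 0 < m -> C n f -> (forall i : 'I_n, C m (tnth gs i)) ->
      C m (comp_op f gs)).

Definition ltlex (t n : nat) (c a : n.-tuple 'I_t) : Prop :=
  exists i : 'I_n,
    (forall j : 'I_n, (j < i)%N -> tnth c j = tnth a j) /\ (tnth c i < tnth a i)%N.

Definition phi (t : nat) (C : opfam t) (n : nat) (a : n.-tuple 'I_t)
    (p : 'I_t * 'I_t) : Prop :=
  exists (f g : op t n), C n f /\ C n g /\
    (forall c : n.-tuple 'I_t, ltlex c a -> f c = g c) /\
    p = (f a, g a).

(* lambda(C, (c,d)) as a predicate on A^+ = nonempty sequences over 'I_t *)
Definition lam (t : nat) (C : opfam t) (cd : 'I_t * 'I_t) (a : seq 'I_t) : Prop :=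
  (0 < size a)%N /\ ~ phi C (in_tuple a) cd.

(* a <=_E b, with 0-based indices: firstOcc(a,c) - 1 = index c a for c in a. *)
Definition leE (t : nat) (a b : seq 'I_t) : Prop :=
  exists h : nat -> nat,
    (forall i, (i < size a)%N -> (h i < size b)%N) /\
    (forall i j, (i < j)%N -> (j < size a)%N -> (h i < h j)%N) /\
    (forall x0 i, (i < size a)%N -> nth x0 a i = nth x0 b (h i)) /\
    a =i b /\
    (forall c, c \in a -> h (index c a) = index c b).

(* Main.v *)
Require Import Defs.
From mathcomp Require Import all_boot.

Theorem lemma5p2 (t : nat) (C : opfam t) (cd : 'I_t * 'I_t) :
  is_clone C ->
  forall a b : seq 'I_t, lam C cd a -> leE a b -> lam C cd b.
Proof.
move=> [Hproj Hcomp] a b [Ha Hna] [h [hb [hmono [hnth [hab hidx]]]]].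
have Hm : (0 < size b)%N by apply: (leq_ltn_trans _ (hb 0 Ha)).
split=> //; case=> f [g [Cf [Cg [Hfg Hp]]]]; apply: Hna.
pose x0 : 'I_t := tnth (in_tuple a) (Ordinal Ha).
have rmono : forall k i, (k < size a)%N -> (i < size a)%N -> (h k < h i)%N -> (k < i)%N.
  move=> k i Hk Hi Hh; case: (ltngtP k i) => // H.
    by have := hmono _ _ H Hk; rewrite ltnNge => /negP; case; apply: ltnW.
  by move: Hh; rewrite H ltnn.
pose sg (j : nat) : nat :=
  match [pick i : 'I_(size a) | h i == j] with
  | Some i => val i | None => index (nth x0 b j) a end.
have S1 : forall j, (j < size b)%N -> (sg j < size a)%N.
  move=> j Hj; rewrite /sg; case: pickP => [i _|_]; first exact: ltn_ord.
  by rewrite index_mem hab mem_nth.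
have S2 : forall j, (j < size b)%N -> nth x0 a (sg j) = nth x0 b j.
  move=> j Hj; rewrite /sg; case: pickP => [i /eqP <-|_].
    exact: hnth (ltn_ord i).
  by apply: nth_index; rewrite hab mem_nth.
have S3 : forall i, (i < size a)%N -> sg (h i) = i.
  move=> i Hi; rewrite /sg; case: pickP => [k /eqP Hk|].
    case: (ltngtP k i) => // H.
      by move: (hmono _ _ H Hi); rewrite Hk ltnn.
    by move: (hmono _ _ H (ltn_ord k)); rewrite Hk ltnn.
  by move/(_ (Ordinal Hi)); rewrite eqxx.
have S4 : forall j i, (j < size b)%N -> (i < size a)%N -> (j < h i)%N -> (sg j < i)%N.
  move=> j i Hj Hi Hji; have Hs := S1 j Hj; apply: rmono => //.
  move: Hs; rewrite /sg; case: pickP => [k /eqP -> //|_ Hs].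
  have Hc : nth x0 b j \in a by rewrite hab mem_nth.
  rewrite hidx //; apply: leq_ltn_trans Hji.
  exact: index_nth.
pose sig (j : 'I_(size b)) : 'I_(size a) := insubd (Ordinal Ha) (sg j).
have Hsig : forall j : 'I_(size b), val (sig j) = sg j.
  by move=> j; rewrite /sig val_insubd S1.
pose gs := [tuple proj_op t (sig j) | j < size b].
have Ev : forall (F : op t (size b)) (x : (size a).-tuple 'I_t),
    comp_op F gs x = F [tuple tnth x (sig j) | j < size b].
  move=> F x; rewrite /comp_op ffunE; congr (F _); apply: eq_from_tnth => j.
  by rewrite !tnth_mktuple /proj_op ffunE.
have Eb : [tuple tnth (in_tuple a) (sig j) | j < size b] = in_tuple b.
  apply: eq_from_tnth => j; rewrite tnth_mktuple !(tnth_nth x0) /= Hsig.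
  exact: S2.
have Cgs : forall j : 'I_(size b), C (size a) (tnth gs j).
  by move=> j; rewrite tnth_mktuple.
exists (comp_op f gs), (comp_op g gs); split; first exact: Hcomp.
split; first exact: Hcomp.
split; last by rewrite !Ev Eb.
move=> x [i [Heq Hlt]]; rewrite !Ev; apply: Hfg.
exists (Ordinal (hb i (ltn_ord i))); split.
  move=> j /= Hj; rewrite tnth_mktuple (tnth_nth x0 (in_tuple b)) /= -S2 //.
  have Hs : (sig j < i)%N by rewrite Hsig; apply: S4.
  rewrite (Heq _ Hs) (tnth_nth x0) /= Hsig //.
have E0 : sig (Ordinal (hb i (ltn_ord i))) = i.
  by apply: val_inj; rewrite Hsig /= S3.
rewrite tnth_mktuple E0; move: Hlt; rewrite !(tnth_nth x0) /= hnth //.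
Qed.
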